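(* For a function $H:\{0,1\}^{u+1}\to\{0,1\}^v$ let $|\psi_H\rangle:=\sum_{R\in\{0,1\}^{u+1}}|R\rangle|H(R)\rangle$ (normalized). For every integer $m$ and every (unbounded-time) quantum algorithm $\mathcal{A}$, $$\Pr_H\big[y_0=H(0\|r)\wedge y_1=H(1\|r):(r,y_0,y_1)\gets\mathcal{A}(|\psi_H\rangle^{\otimes m})\big]\le(2m+1)^4(2^{-u}+2^{-v}),$$ where $H$ is a uniformly random function from $\{0,1\}^{u+1}$ to $\{0,1\}^v$ and $r\in\{0,1\}^u$.
   Context: $\|$ denotes concatenation of bit strings; $u,v$ are positive integers. *)

(* Defs.v *)
From HB Require Import structures.
From mathcomp Require Import all_boot all_order all_algebra.
From mathcomp Require Import reals.
From mathcomp.real_closed Require Import complex.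
Set Implicit Arguments. Unset Strict Implicit. Unset Printing Implicit Defensive.
Import Order.TTheory GRing.Theory Num.Theory.
Local Open Scope ring_scope.

Definition bits (n : nat) := (n.-tuple bool).

(* b || r : prepend the bit b (false = 0, true = 1) to r. *)
Definition bcat (n : nat) (b : bool) (r : bits n) : bits n.+1 := [tuple of b :: r].

Definition hfun (u v : nat) := {ffun bits u.+1 -> bits v}.

(* Computational basis of one register |R>|y>, R in {0,1}^(u+1), y in {0,1}^v. *)
Definition reg (u v : nat) := (bits u.+1 * bits v)%type.

(* Computational basis of m copies (tensor product of m registers). *)
Definition mreg (u v m : nat) := {ffun 'I_m -> reg u v}.

Section Quantum.
Variable R : realType.
Notation C := (R[i]).

(* Normalized |psi_H> = 2^{-(u+1)/2} sum_R |R>|H(R)> *)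
Definition psiH (u v : nat) (H : hfun u v) : reg u v -> C :=
  fun p => if p.2 == H p.1 then (sqrtC ((2 ^ u.+1)%:R : C))^-1 else 0.

Definition psiH_tensor (u v m : nat) (H : hfun u v) : mreg u v m -> C :=
  fun w => \prod_(k < m) psiH H (w k).

Definition psd (T : finType) (M : T -> T -> C) : Prop :=
  forall x : T -> C, 0 <= \sum_(i : T) \sum_(j : T) (x i)^* * M i j * x j.

Definition is_povm (T O : finType) (E : O -> T -> T -> C) : Prop :=
  (forall o, psd (E o)) /\
  (forall i j : T, \sum_(o : O) E o i j = (i == j)%:R).

Definition born (T O : finType) (E : O -> T -> T -> C) (o : O) (psi : T -> C) : C :=
  \sum_(i : T) \sum_(j : T) (psi i)^* * E o i j * psi j.

Definition outc (u v : nat) := (bits u * bits v * bits v)%type.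

(* Pr_H [ y0 = H(0||r) /\ y1 = H(1||r) ] for the algorithm described by E,
   H uniform over all functions. *)
Definition success (u v m : nat) (E : outc u v -> mreg u v m -> mreg u v m -> C) : C :=
  (#|{: hfun u v}|%:R)^-1 *
  \sum_(H : hfun u v) \sum_(r : bits u)
     born E (r, H (bcat false r), H (bcat true r)) (@psiH_tensor u v m H).

End Quantum.

(* Main.v *)
Require Import Defs.
From HB Require Import structures.
From mathcomp Require Import all_boot all_order all_algebra.
From mathcomp Require Import reals.
From mathcomp.real_closed Require Import complex.
From mathcomp Require Import ring.
From mathcomp Require Import zify.
Import Order.TTheory GRing.Theory Num.Theory.
Local Open Scope ring_scope.

Module P1.
Set Implicit Arguments. Unset Strict Implicit. Unset Printing Implicit Defensive.
Local Open Scope ring_scope.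
Section QF.
Variable R : realType.
Local Notation C := (R[i]).
Variable T : finType.
Definition bf (M : T -> T -> C) (x y : T -> C) : C :=
  \sum_(i : T) \sum_(j : T) (x i)^* * M i j * y j.
Lemma bf_sum (I J : finType) M (xs : I -> T -> C) (ys : J -> T -> C) :
  bf M (fun t => \sum_i xs i t) (fun t => \sum_j ys j t) =
  \sum_i \sum_j bf M (xs i) (ys j).
Proof.
have pt : forall a b, (\sum_i xs i a)^* * M a b * (\sum_j ys j b) =
   \sum_i \sum_j (xs i a)^* * M a b * ys j b.
  move=> a b; rewrite rmorph_sum /= !mulr_suml; apply: eq_bigr => i _.
  by rewrite mulr_sumr.
rewrite /bf.
under eq_bigr => a _ do under eq_bigr => b _ do rewrite pt.
under eq_bigr => a _ do rewrite exchange_big /=.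
rewrite exchange_big /=; apply: eq_bigr => i _.
under eq_bigr => a _ do rewrite exchange_big /=.
by rewrite exchange_big.
Qed.

Lemma bf_sub M x y :
  bf M (fun t => x t - y t) (fun t => x t - y t) =
  bf M x x + bf M y y - bf M x y - bf M y x.
Proof.
have pt : forall a b, (x a - y a)^* * M a b * (x b - y b) =
  (x a)^* * M a b * x b + (y a)^* * M a b * y b - (x a)^* * M a b * y b
  - (y a)^* * M a b * x b.
  by move=> a b; rewrite rmorphB /=; ring.
rewrite /bf.
under eq_bigr => a _ do under eq_bigr => b _ do rewrite pt.
under eq_bigr => a _ do rewrite !sumrB big_split /=.
by rewrite !sumrB big_split.
Qed.

Lemma bf_scale M c x :
  bf M (fun t => c * x t) (fun t => c * x t) = c^* * c * bf M x x.
Proof.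
rewrite /bf mulr_sumr; apply: eq_bigr => a _.
rewrite mulr_sumr; apply: eq_bigr => b _.
rewrite rmorphM /=; ring.
Qed.

Lemma bf_opp M x :
  bf M (fun t => - x t) (fun t => - x t) = bf M x x.
Proof.
rewrite /bf; apply: eq_bigr => a _; apply: eq_bigr => b _.
rewrite rmorphN /=; ring.
Qed.

Lemma qf_sum_le (I : finType) M (xs : I -> T -> C) :
  (forall x, 0 <= bf M x x) ->
  bf M (fun t => \sum_i xs i t) (fun t => \sum_i xs i t) <=
  #|I|%:R * \sum_i bf M (xs i) (xs i).
Proof.
move=> psdM.
have H0 : 0 <= \sum_i \sum_j bf M (fun t => xs i t - xs j t) (fun t => xs i t - xs j t).
  by apply: sumr_ge0 => i _; apply: sumr_ge0 => j _; apply: psdM.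
set S := \sum_i bf M (xs i) (xs i).
set B := bf M (fun t => \sum_i xs i t) (fun t => \sum_i xs i t).
have e1 : \sum_(i : I) \sum_(j : I) bf M (xs i) (xs i) = S *+ #|I|.
  rewrite -sumrMnl; apply: eq_bigr => i _; rewrite sumr_const.
  by congr (_ *+ _); apply: eq_card.
have e2 : \sum_(i : I) \sum_(j : I) bf M (xs j) (xs j) = S *+ #|I|.
  rewrite sumr_const; congr (_ *+ _); apply: eq_card.
have e3 : \sum_(i : I) \sum_(j : I) bf M (xs i) (xs j) = B by rewrite /B bf_sum.
have e4 : \sum_(i : I) \sum_(j : I) bf M (xs j) (xs i) = B by rewrite exchange_big.
have E : \sum_i \sum_j bf M (fun t => xs i t - xs j t) (fun t => xs i t - xs j t)
   = (S *+ #|I|) *+ 2 - B *+ 2.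
  under eq_bigr => i _ do under eq_bigr => j _ do rewrite bf_sub.
  under eq_bigr => i _ do rewrite !sumrB big_split /=.
  rewrite !sumrB big_split /= e1 e2 e3 e4.
  clear e1 e2 e3 e4; move: (S *+ #|I|) B => s b.
  by rewrite !mulr2n; ring.
move: H0; rewrite E -mulrnBl pmulrn_lge0 // subr_ge0.
by rewrite mulr_natl.
Qed.
End QF.

End P1.
Import P1.

Module P2.
Set Implicit Arguments. Unset Strict Implicit. Unset Printing Implicit Defensive.
Local Open Scope ring_scope.
Section Upd.
Variables (u v : nat).
Definition pa (r : bits u) : bits u.+1 := bcat false r.
Definition pb (r : bits u) : bits u.+1 := bcat true r.
Lemma pab (r : bits u) : (pa r == pb r) = false.
Proof. by apply/negbTE/eqP => /(congr1 (fun t : bits u.+1 => thead t)). Qed.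

Definition upd (r : bits u) (H : hfun u v) (y0 y1 : bits v) : hfun u v :=
  [ffun x => if x == pa r then y0 else if x == pb r then y1 else H x].

Lemma upd_a r H y0 y1 : upd r H y0 y1 (pa r) = y0.
Proof. by rewrite ffunE eqxx. Qed.
Lemma upd_b r H y0 y1 : upd r H y0 y1 (pb r) = y1.
Proof. by rewrite ffunE eq_sym pab eqxx. Qed.
Lemma upd_upd r H y0 y1 z0 z1 : upd r (upd r H y0 y1) z0 z1 = upd r H z0 z1.
Proof.
apply/ffunP => x; rewrite !ffunE.
by case: (x == pa r) => //; case: (x == pb r).
Qed.
Lemma upd_id r H : upd r H (H (pa r)) (H (pb r)) = H.
Proof.
apply/ffunP => x; rewrite !ffunE.
by case: eqP => [->//|_]; case: eqP => [->|].
Qed.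
Lemma upd_other r H y0 y1 x : x != pa r -> x != pb r -> upd r H y0 y1 x = H x.
Proof. by rewrite ffunE => /negbTE -> /negbTE ->. Qed.
End Upd.

Section Reidx.
Variable R : realType.
Local Notation C := (R[i]).
Variables (u v : nat).

Lemma reidx (r : bits u) (F : hfun u v -> bits v -> bits v -> C) :
  \sum_(H : hfun u v) \sum_(y0 : bits v) \sum_(y1 : bits v)
     F (upd r H y0 y1) (H (pa r)) (H (pb r)) =
  \sum_(H : hfun u v) \sum_(y0 : bits v) \sum_(y1 : bits v) F H y0 y1.
Proof.
rewrite !pair_big /=.
pose phi (q : hfun u v * bits v * bits v) : hfun u v * bits v * bits v :=
  (upd r q.1.1 q.1.2 q.2, q.1.1 (pa r), q.1.1 (pb r)).
have phiK : involutive phi.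
  move=> [[H y0] y1]; rewrite /phi /= upd_upd upd_id upd_a upd_b //.
rewrite [RHS](reindex phi) /=; last by exists phi => q _; apply: phiK.
by apply: eq_bigr => -[[H y0] y1] _.
Qed.
End Reidx.

End P2.
Import P2.

Module P3.
Set Implicit Arguments. Unset Strict Implicit. Unset Printing Implicit Defensive.
Local Open Scope ring_scope.

Section Basic.
Variable R : realType.
Local Notation C := (R[i]).

Lemma conjVn (n : nat) : ((n%:R : C)^-1)^* = n%:R^-1.
Proof. by rewrite fmorphV /= conjC_nat. Qed.

Lemma bf_ext (T : finType) M (x x' y y' : T -> C) :
  (forall t, x t = x' t) -> (forall t, y t = y' t) -> bf M x y = bf M x' y'.
Proof.
move=> ex ey; rewrite /bf; apply: eq_bigr => i _; apply: eq_bigr => j _.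
by rewrite ex ey.
Qed.

Lemma jensen (T I : finType) M (xs : I -> T -> C) :
  (forall x, 0 <= bf M x x) -> (0 < #|I|)%N ->
  bf M (fun t => #|I|%:R^-1 * \sum_i xs i t) (fun t => #|I|%:R^-1 * \sum_i xs i t) <=
  #|I|%:R^-1 * \sum_i bf M (xs i) (xs i).
Proof.
move=> psdM n0.
rewrite bf_scale conjVn.
have nz : (#|I|%:R : C) != 0 by rewrite pnatr_eq0 -lt0n.
have := qf_sum_le xs psdM => h.
rewrite -mulrA; apply: ler_wpM2l; first by rewrite invr_ge0 ler0n.
by rewrite ler_pdivrMl ?ltr0n.
Qed.

Lemma cs4 (T : finType) M (x1 x2 x3 x4 : T -> C) :
  (forall x, 0 <= bf M x x) ->
  bf M (fun t => x1 t + x2 t + x3 t + x4 t) (fun t => x1 t + x2 t + x3 t + x4 t) <=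
  4%:R * (bf M x1 x1 + bf M x2 x2 + bf M x3 x3 + bf M x4 x4).
Proof.
move=> psdM.
pose xs (i : 'I_4) := nth x1 [:: x1; x2; x3; x4] i.
have := qf_sum_le xs psdM; rewrite card_ord.
have e : forall t, \sum_i xs i t = x1 t + x2 t + x3 t + x4 t.
  by move=> t; rewrite !big_ord_recr big_ord0 /= add0r.
rewrite (bf_ext M e e).
by rewrite !big_ord_recr big_ord0 /= add0r.
Qed.

Lemma bf1 (x : 'I_1 -> C) : bf (fun _ _ => 1) x x = (x ord0)^* * x ord0.
Proof. by rewrite /bf !big_ord1 mulr1. Qed.

Lemma psd1 : forall x : 'I_1 -> C, 0 <= bf (fun _ _ => 1) x x.
Proof. by move=> x; rewrite bf1 mulrC mul_conjC_ge0. Qed.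

Lemma jensen_sc (I : finType) (z : I -> C) : (0 < #|I|)%N ->
  (#|I|%:R^-1 * \sum_i z i)^* * (#|I|%:R^-1 * \sum_i z i) <=
  #|I|%:R^-1 * \sum_i (z i)^* * z i.
Proof.
move=> n0.
have := jensen (fun i (_ : 'I_1) => z i) psd1 n0.
rewrite bf1 /=.
suff -> : \sum_i bf (fun _ _ => 1) (fun _ : 'I_1 => z i) (fun _ => z i) = \sum_i (z i)^* * z i by [].
by apply: eq_bigr => i _; rewrite bf1.
Qed.

Lemma cs4_sc (z1 z2 z3 z4 : C) :
  (z1 + z2 + z3 + z4)^* * (z1 + z2 + z3 + z4) <=
  4%:R * (z1^* * z1 + z2^* * z2 + z3^* * z3 + z4^* * z4).
Proof.
have := cs4 (fun _ : 'I_1 => z1) (fun _ => z2) (fun _ => z3) (fun _ => z4) psd1.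
by rewrite !bf1.
Qed.

Lemma sum_ifeq (T : finType) (c : T) (f : T -> C) :
  \sum_y (if c == y then f y else 0) = f c.
Proof.
rewrite (bigD1 c) //= eqxx big1 ?addr0 // => y /negbTE.
by rewrite eq_sym => ->.
Qed.
End Basic.

End P3.
Import P3.

Module P4.
Set Implicit Arguments. Unset Strict Implicit. Unset Printing Implicit Defensive.
Local Open Scope ring_scope.

Section Main.
Variable R : realType.
Local Notation C := (R[i]).
Variables (u v m : nat).
Variable E : outc u v -> mreg u v m -> mreg u v m -> C.
Hypothesis hE : is_povm E.

Local Notation psi H := (@psiH_tensor R u v m H).

Lemma sum_ifeq' (T : finType) (c : T) (f : T -> C) :
  \sum_y (if y == c then f y else 0) = f c.
Proof. by rewrite -(sum_ifeq c); apply: eq_bigr => y _; rewrite eq_sym. Qed.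

Lemma sum_if_out (T : finType) (b : bool) (f : T -> C) :
  \sum_y (if b then f y else 0) = if b then \sum_y f y else 0.
Proof. by case: b => //; rewrite big1. Qed.

Lemma E_psd o x : 0 <= bf (E o) x x.
Proof. by case: hE => h _; apply: h. Qed.

Lemma E_sum x : \sum_o bf (E o) x x = \sum_t (x t)^* * x t.
Proof.
rewrite /bf exchange_big /=; apply: eq_bigr => i _.
rewrite exchange_big /=.
rewrite (bigD1 i) //= [X in _ + X]big1 ?addr0.
  by rewrite -mulr_suml -mulr_sumr (proj2 hE) eqxx mulr1.
move=> j /negbTE ji; rewrite -mulr_suml -mulr_sumr (proj2 hE).
by rewrite eq_sym ji mulr0 mul0r.
Qed.

Lemma E_le o x : bf (E o) x x <= \sum_t (x t)^* * x t.
Proof.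
rewrite -E_sum (bigD1 o) //= lerDl.
by apply: sumr_ge0 => o' _; apply: E_psd.
Qed.

Lemma LA r (G : hfun u v -> bits v -> bits v -> C) :
  \sum_H \sum_y G (upd r H (H (pa r)) y) (H (pa r)) (H (pb r)) =
  \sum_H \sum_z G H (H (pa r)) z.
Proof.
have := reidx r (fun H' z0 z1 => if z0 == H' (pa r) then G H' z0 z1 else 0).
under eq_bigr => H _ do under eq_bigr => y0 _ do under eq_bigr => y1 _ do rewrite upd_a.
under eq_bigr => H _ do under eq_bigr => y0 _ do rewrite sum_if_out.
under eq_bigr => H _ do rewrite sum_ifeq.
under [X in _ = X -> _]eq_bigr => H _ do under eq_bigr => y0 _ do rewrite sum_if_out.
under [X in _ = X -> _]eq_bigr => H _ do rewrite sum_ifeq'.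
by [].
Qed.

Lemma LB r (G : hfun u v -> bits v -> bits v -> C) :
  \sum_H \sum_y G (upd r H y (H (pb r))) (H (pa r)) (H (pb r)) =
  \sum_H \sum_z G H z (H (pb r)).
Proof.
have := reidx r (fun H' z0 z1 => if z1 == H' (pb r) then G H' z0 z1 else 0).
under eq_bigr => H _ do under eq_bigr => y0 _ do under eq_bigr => y1 _ do rewrite upd_b.
under eq_bigr => H _ do under eq_bigr => y0 _ do rewrite sum_ifeq.
under [X in _ = X -> _]eq_bigr => H _ do under eq_bigr => y0 _ do rewrite sum_ifeq'.
by [].
Qed.

Lemma LC r (G : hfun u v -> bits v -> bits v -> C) :
  \sum_H \sum_(p : bits v * bits v) G (upd r H p.1 p.2) (H (pa r)) (H (pb r)) =
  \sum_H \sum_z0 \sum_z1 G H z0 z1.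
Proof.
rewrite -(reidx r G); apply: eq_bigr => H _.
by rewrite pair_big.
Qed.

End Main.

End P4.
Import P4.

Module P5.
Set Implicit Arguments. Unset Strict Implicit. Unset Printing Implicit Defensive.
Local Open Scope ring_scope.

Lemma card_bits n : #|{: bits n}| = (2 ^ n)%N.
Proof. by rewrite card_tuple card_bool. Qed.

Section Psi.
Variable R : realType.
Local Notation C := (R[i]).
Variables (u v m : nat).
Local Notation psi H := (@psiH_tensor R u v m H).
Local Notation N := ((2 ^ u.+1)%:R : C).

Lemma N_neq0 : N != 0.
Proof. by rewrite pnatr_eq0 expn_eq0. Qed.

Lemma psiH_sq (H : hfun u v) p :
  (psiH R H p)^* * psiH R H p = if p.2 == H p.1 then N^-1 else 0.
Proof.
rewrite /psiH; case: eqP => _; last by rewrite mulr0.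
have ge : 0 <= (sqrtC N)^-1 by rewrite invr_ge0 sqrtC_ge0 ler0n.
by rewrite (geC0_conj ge) -invfM -expr2 sqrtCK.
Qed.

Lemma sum_psiH_sq (H : hfun u v) :
  \sum_p (psiH R H p)^* * psiH R H p = 1.
Proof.
under eq_bigr => p _ do rewrite psiH_sq.
rewrite -(pair_big predT predT (fun x y => if y == H x then N^-1 else 0)) /=.
under eq_bigr => x _ do rewrite sum_ifeq'.
rewrite sumr_const.
have -> : #|[pred _ : bits u.+1 | true]| = #|{: bits u.+1}| by apply: eq_card.
by rewrite card_bits -[RHS](mulVf N_neq0) mulr_natr.
Qed.

Lemma sum_psiH_sq_at (H : hfun u v) x0 :
  \sum_p (psiH R H p)^* * psiH R H p * (p.1 == x0)%:R = N^-1.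
Proof.
under eq_bigr => p _ do rewrite psiH_sq.
rewrite -(pair_big predT predT (fun x y => (if y == H x then N^-1 else 0) * (x == x0)%:R)) /=.
rewrite (bigD1 x0) //= [X in _ + X]big1 ?addr0.
  under eq_bigr => y _ do rewrite eqxx mulr1.
  by rewrite sum_ifeq'.
move=> x /negbTE ->; apply: big1 => y _; by rewrite mulr0.
Qed.

Lemma psi_sq (H : hfun u v) w :
  (psi H w)^* * psi H w = \prod_k ((psiH R H (w k))^* * psiH R H (w k)).
Proof. by rewrite /psiH_tensor rmorph_prod /= -big_split. Qed.

Lemma psi_norm (H : hfun u v) : \sum_w (psi H w)^* * psi H w = 1.
Proof.
under eq_bigr => w _ do rewrite psi_sq.
rewrite /mreg -(bigA_distr_bigA (fun (k : 'I_m) p => (psiH R H p)^* * psiH R H p)) /=.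
by rewrite big1 // => k _; rewrite sum_psiH_sq.
Qed.

Lemma prod_if1 (I : finType) (k : I) (F : I -> C) :
  \prod_j (if j == k then F j else 1) = F k.
Proof.
rewrite (bigD1 k) //= eqxx big1 ?mulr1 // => j /negbTE -> //.
Qed.

Lemma psi_marg (H : hfun u v) (k l : 'I_m) x0 x1 : x0 != x1 ->
  \sum_(w : mreg u v m) ((w k).1 == x0)%:R * ((w l).1 == x1)%:R * ((psi H w)^* * psi H w)
  <= N^-1 * N^-1.
Proof.
move=> x01.
pose f (j : 'I_m) (p : reg u v) := (psiH R H p)^* * psiH R H p *
   (if j == k then (p.1 == x0)%:R else 1) * (if j == l then (p.1 == x1)%:R else 1).
have ew : forall w : {ffun 'I_m -> reg u v}, ((w k).1 == x0)%:R * ((w l).1 == x1)%:R * ((psi H w)^* * psi H w)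
   = \prod_j f j (w j).
  move=> w; rewrite psi_sq /f !big_split /=.
  rewrite (prod_if1 k (fun j => ((w j).1 == x0)%:R)).
  rewrite (prod_if1 l (fun j => ((w j).1 == x1)%:R)).
  by rewrite mulrC mulrA.
under eq_bigr => w _ do rewrite ew.
rewrite /mreg -(bigA_distr_bigA f) /=.
have [kl|kl] := eqVneq k l.
  rewrite (bigD1 k) //= big1.
    by rewrite mul0r mulr_ge0 // invr_ge0 ler0n.
  move=> p _; rewrite /f -kl eqxx.
  case: eqP => [->|]; last by rewrite mulr0 mul0r.
  by rewrite (negbTE x01) mulr0.
rewrite (bigD1 k) //= (bigD1 l) /=; last by rewrite eq_sym.
rewrite [X in _ * (_ * X)]big1 ?mulr1.
  have e1 : \sum_j f k j = N^-1.
    rewrite -(sum_psiH_sq_at H x0); apply: eq_bigr => p _.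
    by rewrite /f eqxx (negbTE kl) mulr1.
  have e2 : \sum_j f l j = N^-1.
    rewrite -(sum_psiH_sq_at H x1); apply: eq_bigr => p _.
    by rewrite /f eqxx eq_sym (negbTE kl) mulr1.
  by rewrite e1 e2.
move=> i /andP [ik il].
rewrite -(sum_psiH_sq H); apply: eq_bigr => p _.
by rewrite /f (negbTE ik) (negbTE il) !mulr1.
Qed.
End Psi.

End P5.
Import P5.

Module P6.
Set Implicit Arguments. Unset Strict Implicit. Unset Printing Implicit Defensive.
Local Open Scope ring_scope.

Section Pieces.
Variable R : realType.
Local Notation C := (R[i]).
Variables (u v m : nat).
Variable E : outc u v -> mreg u v m -> mreg u v m -> C.
Hypothesis hE : is_povm E.

Local Notation psi H := (@psiH_tensor R u v m H).
Local Notation nr := #|{: bits v}|.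
Local Notation np := #|{: bits v * bits v}|.
Local Notation qE o x := (bf (E o) x x).

Definition pA r (H : hfun u v) (w : mreg u v m) : C :=
  nr%:R^-1 * \sum_(y : bits v) psi (upd r H (H (pa r)) y) w.
Definition pB r (H : hfun u v) (w : mreg u v m) : C :=
  nr%:R^-1 * \sum_(y : bits v) psi (upd r H y (H (pb r))) w.
Definition pC r (H : hfun u v) (w : mreg u v m) : C :=
  np%:R^-1 * \sum_(p : bits v * bits v) psi (upd r H p.1 p.2) w.
Definition pD r (H : hfun u v) (w : mreg u v m) : C :=
  psi H w - pA r H w - pB r H w + pC r H w.

Lemma nr_gt0 : (0 < nr)%N.
Proof. by rewrite card_bits expn_gt0. Qed.
Lemma np_gt0 : (0 < np)%N.
Proof. by rewrite card_prod muln_gt0 nr_gt0. Qed.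

Lemma decomp o r (H : hfun u v) :
  qE o (psi H) <= 4%:R * (qE o (pA r H) + qE o (pB r H) + qE o (pC r H) + qE o (pD r H)).
Proof.
have e : forall w, psi H w = pA r H w + pB r H w + (- pC r H w) + pD r H w.
  by move=> w; rewrite /pD; ring.
rewrite (bf_ext (E o) e e).
have := cs4 (pA r H) (pB r H) (fun w => - pC r H w) (pD r H) (E_psd hE o).
by rewrite bf_opp.
Qed.

Lemma sum_outc (F : outc u v -> C) :
  \sum_(r : bits u) \sum_(z0 : bits v) \sum_(z1 : bits v) F (r, z0, z1) = \sum_o F o.
Proof.
rewrite pair_big /= pair_big /=.
by apply: eq_bigr => -[[r z0] z1] _.
Qed.

Lemma XC : \sum_(H : hfun u v) \sum_(r : bits u) \sum_z0 \sum_z1 qE (r, z0, z1) (psi H)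
  = #|{: hfun u v}|%:R.
Proof.
under eq_bigr => H _ do rewrite (sum_outc (fun o => qE o (psi H))) E_sum // psi_norm.
rewrite sumr_const.
by congr (_ *+ _); apply: eq_card.
Qed.

Lemma XA : \sum_(r : bits u) \sum_(H : hfun u v) \sum_z qE (r, H (pa r), z) (psi H)
  <= #|{: hfun u v}|%:R.
Proof.
rewrite -XC exchange_big /=; apply: ler_sum => H _.
apply: ler_sum => r _.
rewrite [X in _ <= X](bigD1 (H (pa r))) //= lerDl.
by apply: sumr_ge0 => z0 _; apply: sumr_ge0 => z1 _; apply: E_psd.
Qed.

Lemma XB : \sum_(r : bits u) \sum_(H : hfun u v) \sum_z qE (r, z, H (pb r)) (psi H)
  <= #|{: hfun u v}|%:R.
Proof.
rewrite -XC exchange_big /=; apply: ler_sum => H _.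
apply: ler_sum => r _.
apply: ler_sum => z0 _.
rewrite [X in _ <= X](bigD1 (H (pb r))) //= lerDl.
by apply: sumr_ge0 => z1 _; apply: E_psd.
Qed.

Lemma JA r : \sum_(H : hfun u v) qE (r, H (pa r), H (pb r)) (pA r H)
  <= nr%:R^-1 * \sum_(H : hfun u v) \sum_z qE (r, H (pa r), z) (psi H).
Proof.
apply: le_trans.
  apply: ler_sum => H _.
  exact: (jensen (fun y => psi (upd r H (H (pa r)) y)) (E_psd hE _) nr_gt0).
rewrite -mulr_sumr le_eqVlt; apply/orP; left; apply/eqP; congr (_ * _).
exact: (LA r (fun H' z0 z1 => qE (r, z0, z1) (psi H'))).
Qed.

Lemma JB r : \sum_(H : hfun u v) qE (r, H (pa r), H (pb r)) (pB r H)
  <= nr%:R^-1 * \sum_(H : hfun u v) \sum_z qE (r, z, H (pb r)) (psi H).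
Proof.
apply: le_trans.
  apply: ler_sum => H _.
  exact: (jensen (fun y => psi (upd r H y (H (pb r)))) (E_psd hE _) nr_gt0).
rewrite -mulr_sumr le_eqVlt; apply/orP; left; apply/eqP; congr (_ * _).
exact: (LB r (fun H' z0 z1 => qE (r, z0, z1) (psi H'))).
Qed.

Lemma JC r : \sum_(H : hfun u v) qE (r, H (pa r), H (pb r)) (pC r H)
  <= np%:R^-1 * \sum_(H : hfun u v) \sum_z0 \sum_z1 qE (r, z0, z1) (psi H).
Proof.
apply: le_trans.
  apply: ler_sum => H _.
  exact: (jensen (fun p : bits v * bits v => psi (upd r H p.1 p.2)) (E_psd hE _) np_gt0).
rewrite -mulr_sumr le_eqVlt; apply/orP; left; apply/eqP; congr (_ * _).
exact: (LC r (fun H' z0 z1 => qE (r, z0, z1) (psi H'))).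
Qed.

End Pieces.

End P6.
Import P6.

Module P7.
Set Implicit Arguments. Unset Strict Implicit. Unset Printing Implicit Defensive.
Local Open Scope ring_scope.

Section DPart.
Variable R : realType.
Local Notation C := (R[i]).
Variables (u v m : nat).
Local Notation psi H := (@psiH_tensor R u v m H).
Local Notation nr := #|{: bits v}|.
Local Notation np := #|{: bits v * bits v}|.
Local Notation sq z := (z^* * z).
Local Notation pA := (@pA R u v m).
Local Notation pB := (@pB R u v m).
Local Notation pC := (@pC R u v m).
Local Notation pD := (@pD R u v m).

Lemma sq_ge0 (z : C) : 0 <= sq z.
Proof. by rewrite mulrC mul_conjC_ge0. Qed.

Lemma upd_nb r (H : hfun u v) y0 y1 y1' x : x != pb r -> upd r H y0 y1 x = upd r H y0 y1' x.
Proof. by rewrite !ffunE => /negbTE ->. Qed.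
Lemma upd_na r (H : hfun u v) y0 y0' y1 x : x != pa r -> upd r H y0 y1 x = upd r H y0' y1 x.
Proof. by rewrite !ffunE => /negbTE ->. Qed.

Lemma psi_nb r H y0 y1 y1' (w : mreg u v m) : (forall k, (w k).1 != pb r) ->
  psi (upd r H y0 y1) w = psi (upd r H y0 y1') w.
Proof.
move=> hw; rewrite /psiH_tensor; apply: eq_bigr => k _.
by rewrite /psiH (upd_nb _ _ _ y1') ?hw.
Qed.
Lemma psi_na r H y0 y0' y1 (w : mreg u v m) : (forall k, (w k).1 != pa r) ->
  psi (upd r H y0 y1) w = psi (upd r H y0' y1) w.
Proof.
move=> hw; rewrite /psiH_tensor; apply: eq_bigr => k _.
by rewrite /psiH (upd_na _ _ y0') ?hw.
Qed.

Lemma nr_neq0 : (nr%:R : C) != 0.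
Proof. by rewrite pnatr_eq0 -lt0n nr_gt0. Qed.

Lemma sum_const_nr (c : C) : \sum_(y : bits v) c = c * nr%:R.
Proof.
rewrite sumr_const -[c *+ _]mulr_natr.
have -> : #|[pred _ : bits v | true]| = nr by apply: eq_card.
by [].
Qed.

Lemma avg_const (c : C) : nr%:R^-1 * \sum_(y : bits v) c = c.
Proof. by rewrite sum_const_nr mulrCA mulVf ?mulr1 ?nr_neq0. Qed.

Lemma avg_pair1 (f : bits v -> C) :
  np%:R^-1 * \sum_(p : bits v * bits v) f p.1 = nr%:R^-1 * \sum_y f y.
Proof.
rewrite -(pair_big predT predT (fun y0 y1 => f y0)) /=.
under eq_bigr => y _ do rewrite sum_const_nr.
rewrite -mulr_suml card_prod natrM.
by field; rewrite nr_neq0.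
Qed.

Lemma avg_pair2 (f : bits v -> C) :
  np%:R^-1 * \sum_(p : bits v * bits v) f p.2 = nr%:R^-1 * \sum_y f y.
Proof.
rewrite -(pair_big predT predT (fun y0 y1 => f y1)) /=.
rewrite exchange_big /=.
under eq_bigr => y _ do rewrite sum_const_nr.
rewrite -mulr_suml card_prod natrM.
by field; rewrite nr_neq0.
Qed.

Lemma pD_zero_b r H (w : mreg u v m) : (forall k, (w k).1 != pb r) -> pD r H w = 0.
Proof.
move=> hw.
have eA : pA r H w = psi H w.
  rewrite /P6.pA.
  under eq_bigr => y _ do rewrite (@psi_nb r H (H (pa r)) y (H (pb r)) w hw) upd_id.
  by rewrite avg_const.
have eC : pC r H w = pB r H w.
  rewrite /P6.pC.
  under eq_bigr => p _ do rewrite (@psi_nb r H p.1 p.2 (H (pb r)) w hw).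
  by rewrite (avg_pair1 (fun y0 => psi (upd r H y0 (H (pb r))) w)).
by rewrite /P6.pD eA eC; ring.
Qed.

Lemma pD_zero_a r H (w : mreg u v m) : (forall k, (w k).1 != pa r) -> pD r H w = 0.
Proof.
move=> hw.
have eB : pB r H w = psi H w.
  rewrite /P6.pB.
  under eq_bigr => y _ do rewrite (@psi_na r H y (H (pa r)) (H (pb r)) w hw) upd_id.
  by rewrite avg_const.
have eC : pC r H w = pA r H w.
  rewrite /P6.pC.
  under eq_bigr => p _ do rewrite (@psi_na r H p.1 (H (pa r)) p.2 w hw).
  by rewrite (avg_pair2 (fun y1 => psi (upd r H (H (pa r)) y1) w)).
by rewrite /P6.pD eB eC; ring.
Qed.

End DPart.

End P7.
Import P7.

Module P8.
Set Implicit Arguments. Unset Strict Implicit. Unset Printing Implicit Defensive.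
Local Open Scope ring_scope.

Section DPart2.
Variable R : realType.
Local Notation C := (R[i]).
Variables (u v m : nat).
Local Notation psi H := (@psiH_tensor R u v m H).
Local Notation nr := #|{: bits v}|.
Local Notation np := #|{: bits v * bits v}|.
Local Notation sq z := (z^* * z).
Local Notation pA := (@pA R u v m).
Local Notation pB := (@pB R u v m).
Local Notation pC := (@pC R u v m).
Local Notation pD := (@pD R u v m).

Definition tau r (w : mreg u v m) : C :=
  \sum_k \sum_l ((w k).1 == pa r)%:R * ((w l).1 == pb r)%:R.

Lemma tau_ge0 r w : 0 <= tau r w.
Proof. by apply: sumr_ge0 => k _; apply: sumr_ge0 => l _; rewrite mulr_ge0 ?ler0n. Qed.

Lemma tau_ge1 r (w : mreg u v m) k0 l0 :
  (w k0).1 == pa r -> (w l0).1 == pb r -> 1 <= tau r w.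
Proof.
move=> hk hl; rewrite /tau (bigD1 k0) //= (bigD1 l0) //= hk hl mulr1.
rewrite -addrA lerDl addr_ge0 //.
  by apply: sumr_ge0 => l _; rewrite mulr_ge0 ?ler0n.
by apply: sumr_ge0 => k _; apply: sumr_ge0 => l _; rewrite mulr_ge0 ?ler0n.
Qed.

Lemma sqA r w : \sum_(H : hfun u v) sq (pA r H w) <= \sum_(H : hfun u v) sq (psi H w).
Proof.
apply: (@le_trans _ _ (\sum_(H : hfun u v) nr%:R^-1 *
   \sum_y sq (psi (upd r H (H (pa r)) y) w))).
  apply: ler_sum => H _.
  rewrite /P6.pA /P6.pB /P6.pC; exact: (jensen_sc (fun y => psi (upd r H (H (pa r)) y) w) (nr_gt0 v)).
have h : \sum_(H : hfun u v) \sum_(y : bits v) sq (psi (upd r H (H (pa r)) y) w)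
    = \sum_(H : hfun u v) \sum_(z : bits v) sq (psi H w)
  := LA r (fun H' _ _ => sq (psi H' w)).
rewrite -mulr_sumr h mulr_sumr.
by under eq_bigr => H _ do rewrite avg_const.
Qed.

Lemma sqB r w : \sum_(H : hfun u v) sq (pB r H w) <= \sum_(H : hfun u v) sq (psi H w).
Proof.
apply: (@le_trans _ _ (\sum_(H : hfun u v) nr%:R^-1 *
   \sum_y sq (psi (upd r H y (H (pb r))) w))).
  apply: ler_sum => H _.
  rewrite /P6.pA /P6.pB /P6.pC; exact: (jensen_sc (fun y => psi (upd r H y (H (pb r))) w) (nr_gt0 v)).
have h : \sum_(H : hfun u v) \sum_(y : bits v) sq (psi (upd r H y (H (pb r))) w)
    = \sum_(H : hfun u v) \sum_(z : bits v) sq (psi H w)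
  := LB r (fun H' _ _ => sq (psi H' w)).
rewrite -mulr_sumr h mulr_sumr.
by under eq_bigr => H _ do rewrite avg_const.
Qed.

Lemma sqC r w : \sum_(H : hfun u v) sq (pC r H w) <= \sum_(H : hfun u v) sq (psi H w).
Proof.
apply: (@le_trans _ _ (\sum_(H : hfun u v) np%:R^-1 *
   \sum_(p : bits v * bits v) sq (psi (upd r H p.1 p.2) w))).
  apply: ler_sum => H _.
  rewrite /P6.pA /P6.pB /P6.pC; exact: (jensen_sc (fun p : bits v * bits v => psi (upd r H p.1 p.2) w) (np_gt0 v)).
have h : \sum_(H : hfun u v) \sum_(p : bits v * bits v) sq (psi (upd r H p.1 p.2) w)
    = \sum_(H : hfun u v) \sum_(z0 : bits v) \sum_(z1 : bits v) sq (psi H w)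
  := LC r (fun H' _ _ => sq (psi H' w)).
rewrite -mulr_sumr h mulr_sumr.
apply: ler_sum => H _.
under eq_bigr => z0 _ do rewrite sum_const_nr.
rewrite sum_const_nr card_prod natrM.
rewrite le_eqVlt; apply/orP; left; apply/eqP.
by field; rewrite nr_neq0.
Qed.

Lemma sq_opp (z : C) : sq (- z) = sq z.
Proof. by rewrite rmorphN /= mulrNN. Qed.

Lemma Dw r (w : mreg u v m) :
  \sum_(H : hfun u v) sq (pD r H w) <= 16%:R * tau r w * \sum_(H : hfun u v) sq (psi H w).
Proof.
have rhs0 : 0 <= 16%:R * tau r w * \sum_(H : hfun u v) sq (psi H w).
  by rewrite !mulr_ge0 ?ler0n ?tau_ge0 // sumr_ge0 // => H _; apply: sq_ge0.
case: (pickP (fun k => (w k).1 == pa r)) => [k0 hk|na]; last first.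
  rewrite big1 // => H _; rewrite pD_zero_a ?mulr0 // => k.
  by rewrite na.
case: (pickP (fun k => (w k).1 == pb r)) => [l0 hl|nb]; last first.
  rewrite big1 // => H _; rewrite pD_zero_b ?mulr0 // => k.
  by rewrite nb.
have t1 := tau_ge1 hk hl.
apply: (@le_trans _ _ (\sum_(H : hfun u v) tau r w * (4%:R *
   (sq (psi H w) + sq (pA r H w) + sq (pB r H w) + sq (pC r H w))))).
  apply: ler_sum => H _.
  apply: (le_trans (ler_peMl (sq_ge0 _) t1)).
  apply: ler_wpM2l; first exact: tau_ge0.
  have e : pD r H w = psi H w + - pA r H w + - pB r H w + pC r H w.
    by rewrite /P6.pD.
  rewrite e; apply: (le_trans (cs4_sc _ _ _ _)).
  by rewrite !sq_opp.
rewrite -mulr_sumr -mulr_sumr !big_split /=.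
rewrite (mulrC 16%:R) -mulrA; apply: ler_wpM2l; first exact: tau_ge0.
have -> : (16%:R : C) = 4%:R * 4%:R by rewrite -natrM.
rewrite -mulrA; apply: ler_wpM2l; first by rewrite ler0n.
have := sqA r w; have := sqB r w; have := sqC r w.
set S := \sum_(H : hfun u v) sq (psi H w).
move=> hc hb ha.
have -> : (4%:R : C) * S = S + S + S + S.
  by rewrite -[4%N]/(1+1+1+1)%N !natrD !mulrDl mul1r.
by rewrite !lerD.
Qed.

End DPart2.

End P8.
Import P8.

Module P9.
Set Implicit Arguments. Unset Strict Implicit. Unset Printing Implicit Defensive.
Local Open Scope ring_scope.

Section Final.
Variable R : realType.
Local Notation C := (R[i]).
Variables (u v m : nat).
Variable E : outc u v -> mreg u v m -> mreg u v m -> C.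
Hypothesis hE : is_povm E.
Local Notation psi H := (@psiH_tensor R u v m H).
Local Notation nr := #|{: bits v}|.
Local Notation np := #|{: bits v * bits v}|.
Local Notation sq z := (z^* * z).
Local Notation pA := (@pA R u v m).
Local Notation pB := (@pB R u v m).
Local Notation pC := (@pC R u v m).
Local Notation pD := (@pD R u v m).
Local Notation qE o x := (bf (E o) x x).
Local Notation N := ((2 ^ u.+1)%:R : C).
Local Notation tau := (@P8.tau R u v m).
Local Notation hN := (#|{: hfun u v}|%:R : C).

Lemma tau_sum r (H : hfun u v) :
  \sum_(w : mreg u v m) tau r w * sq (psi H w) <= (N^-1 * N^-1) *+ (m * m).
Proof.
rewrite /P8.tau.
under eq_bigr => w _ do rewrite mulr_suml.
under eq_bigr => w _ do under eq_bigr => k _ do rewrite mulr_suml.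
rewrite exchange_big /=.
under eq_bigr => k _ do rewrite exchange_big /=.
apply: (@le_trans _ _ (\sum_(k < m) \sum_(l < m) N^-1 * N^-1)).
  apply: ler_sum => k _; apply: ler_sum => l _.
  exact: (psi_marg R H k l (negbT (pab r))).
by rewrite sumr_const sumr_const card_ord -mulrnA.
Qed.

Lemma Dtot :
  \sum_(r : bits u) \sum_(H : hfun u v) qE (r, H (pa r), H (pb r)) (pD r H)
  <= 16%:R * (hN * (#|{: bits u}|%:R * ((N^-1 * N^-1) *+ (m * m)))).
Proof.
apply: (@le_trans _ _ (\sum_(r : bits u) \sum_(w : mreg u v m) \sum_(H : hfun u v) sq (pD r H w))).
  apply: ler_sum => r _; rewrite [X in _ <= X]exchange_big /=; apply: ler_sum => H _.
  exact: (E_le hE).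
apply: (@le_trans _ _ (\sum_(r : bits u) \sum_(w : mreg u v m) \sum_(H : hfun u v)
    16%:R * (tau r w * sq (psi H w)))).
  apply: ler_sum => r _; apply: ler_sum => w _.
  apply: le_trans; first exact: Dw.
  by rewrite -mulrA -!mulr_sumr.
under eq_bigr => r _ do under eq_bigr => w _ do rewrite -mulr_sumr.
under eq_bigr => r _ do rewrite -mulr_sumr.
rewrite -mulr_sumr; apply: ler_wpM2l; first by rewrite ler0n.
under eq_bigr => r _ do rewrite exchange_big /=.
rewrite exchange_big /=.
apply: (@le_trans _ _ (\sum_(H : hfun u v) \sum_(r : bits u) (N^-1 * N^-1) *+ (m * m))).
  by apply: ler_sum => H _; apply: ler_sum => r _; exact: tau_sum.
rewrite !sumr_const !mulr_natl.
rewrite le_eqVlt; apply/orP; left; apply/eqP.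
by congr (_ *+ _ *+ _); apply: eq_card.
Qed.
End Final.

End P9.
Import P9.

Module P10.
Set Implicit Arguments. Unset Strict Implicit. Unset Printing Implicit Defensive.
Local Open Scope ring_scope.

Section Total.
Variable R : realType.
Local Notation C := (R[i]).
Variables (u v m : nat).
Variable E : outc u v -> mreg u v m -> mreg u v m -> C.
Hypothesis hE : is_povm E.
Local Notation psi H := (@psiH_tensor R u v m H).
Local Notation nr := #|{: bits v}|.
Local Notation np := #|{: bits v * bits v}|.
Local Notation pA := (@pA R u v m).
Local Notation pB := (@pB R u v m).
Local Notation pC := (@pC R u v m).
Local Notation pD := (@pD R u v m).
Local Notation qE o x := (bf (E o) x x).
Local Notation N := ((2 ^ u.+1)%:R : C).
Local Notation hN := (#|{: hfun u v}|%:R : C).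

Lemma sumA : \sum_(r : bits u) \sum_(H : hfun u v) qE (r, H (pa r), H (pb r)) (pA r H)
  <= nr%:R^-1 * hN.
Proof.
apply: (@le_trans _ _ (\sum_(r : bits u) nr%:R^-1 *
   \sum_(H : hfun u v) \sum_z qE (r, H (pa r), z) (psi H))).
  by apply: ler_sum => r _; apply: JA.
rewrite -mulr_sumr; apply: ler_wpM2l; first by rewrite invr_ge0 ler0n.
exact: XA.
Qed.

Lemma sumB : \sum_(r : bits u) \sum_(H : hfun u v) qE (r, H (pa r), H (pb r)) (pB r H)
  <= nr%:R^-1 * hN.
Proof.
apply: (@le_trans _ _ (\sum_(r : bits u) nr%:R^-1 *
   \sum_(H : hfun u v) \sum_z qE (r, z, H (pb r)) (psi H))).
  by apply: ler_sum => r _; apply: JB.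
rewrite -mulr_sumr; apply: ler_wpM2l; first by rewrite invr_ge0 ler0n.
exact: XB.
Qed.

Lemma sumC : \sum_(r : bits u) \sum_(H : hfun u v) qE (r, H (pa r), H (pb r)) (pC r H)
  <= np%:R^-1 * hN.
Proof.
apply: (@le_trans _ _ (\sum_(r : bits u) np%:R^-1 *
   \sum_(H : hfun u v) \sum_z0 \sum_z1 qE (r, z0, z1) (psi H))).
  by apply: ler_sum => r _; apply: JC.
rewrite -mulr_sumr; apply: ler_wpM2l; first by rewrite invr_ge0 ler0n.
rewrite exchange_big /= (XC hE).
exact: lexx.
Qed.

Lemma total :
  \sum_(r : bits u) \sum_(H : hfun u v) qE (r, H (pa r), H (pb r)) (psi H)
  <= 4%:R * (nr%:R^-1 * hN + nr%:R^-1 * hN + np%:R^-1 * hN +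
      16%:R * (hN * (#|{: bits u}|%:R * ((N^-1 * N^-1) *+ (m * m))))).
Proof.
apply: (@le_trans _ _ (\sum_(r : bits u) \sum_(H : hfun u v) 4%:R *
  (qE (r, H (pa r), H (pb r)) (pA r H) + qE (r, H (pa r), H (pb r)) (pB r H) +
   qE (r, H (pa r), H (pb r)) (pC r H) + qE (r, H (pa r), H (pb r)) (pD r H)))).
  by apply: ler_sum => r _; apply: ler_sum => H _; apply: decomp.
under eq_bigr => r _ do rewrite -mulr_sumr !big_split /=.
rewrite -mulr_sumr !big_split /=.
apply: ler_wpM2l; first by rewrite ler0n.
by rewrite !lerD ?sumA ?sumB ?sumC ?(Dtot hE).
Qed.

Lemma total0 : m = 0%N ->
  \sum_(r : bits u) \sum_(H : hfun u v) qE (r, H (pa r), H (pb r)) (psi H)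
  <= np%:R^-1 * hN.
Proof.
move=> m0.
have p1 : forall (H : hfun u v) w, psi H w = 1.
  move=> H w; rewrite /psiH_tensor big1 // => -[k hk].
  by exfalso; rewrite m0 in hk.
have e : forall r (H : hfun u v) w, psi H w = pC r H w.
  move=> r H w; rewrite /P6.pC.
  under eq_bigr => p _ do rewrite p1.
  rewrite sumr_const p1.
  have -> : #|[pred _ : bits v * bits v | true]| = np by apply: eq_card.
  by rewrite -[1 *+ _]mulr_natr mul1r mulVf // pnatr_eq0 -lt0n np_gt0.
apply: le_trans sumC.
apply: ler_sum => r _; apply: ler_sum => H _.
by rewrite (bf_ext _ (e r H) (e r H)).
Qed.

End Total.

End P10.
Import P10.

Module P11.
Set Implicit Arguments. Unset Strict Implicit. Unset Printing Implicit Defensive.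
Local Open Scope ring_scope.

Lemma numeric (R : realType) (X Y h : R[i]) (m : nat) :
  1 <= X -> 1 <= Y -> h != 0 -> (0 < m)%N ->
  h^-1 * (4%:R * (Y^-1 * h + Y^-1 * h + (Y * Y)^-1 * h +
      16%:R * (h * (X * (((2 * X)^-1 * (2 * X)^-1) *+ (m * m))))))
  <= ((2 * m + 1) ^ 4)%:R * (X^-1 + Y^-1).
Proof.
move=> X1 Y1 h0 m0.
have X0 : X != 0 by apply: lt0r_neq0; apply: lt_le_trans X1.
have Y0 : Y != 0 by apply: lt0r_neq0; apply: lt_le_trans Y1.
have -> : h^-1 * (4%:R * (Y^-1 * h + Y^-1 * h + (Y * Y)^-1 * h +
      16%:R * (h * (X * (((2 * X)^-1 * (2 * X)^-1) *+ (m * m))))))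
   = 8%:R * Y^-1 + 4%:R * (Y^-1 * Y^-1) + (16 * m * m)%:R * X^-1.
  rewrite -mulr_natr !natrM.
  field.
  by rewrite h0 X0 Y0.
have yge0 : 0 <= Y^-1 by rewrite invr_ge0; apply: le_trans Y1.
have xge0 : 0 <= X^-1 by rewrite invr_ge0; apply: le_trans X1.
have yle1 : Y^-1 <= 1 by rewrite invf_le1 //; apply: lt_le_trans Y1.
have yy : Y^-1 * Y^-1 <= Y^-1 by apply: ler_piMl.
rewrite mulrDr addrC.
apply: lerD.
  by apply: ler_wpM2r => //; rewrite ler_nat; nia.
apply: (@le_trans _ _ (12%:R * Y^-1)).
  have -> : (12%:R : R[i]) * Y^-1 = 8%:R * Y^-1 + 4%:R * Y^-1.
    by rewrite -mulrDl -natrD.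
  by apply: lerD => //; apply: ler_wpM2l => //; rewrite ler0n.
by apply: ler_wpM2r => //; rewrite ler_nat; nia.
Qed.


End P11.
Import P11.

Theorem mainTheorem4 (R : realType) (u v m : nat) (hu : (0 < u)%N) (hv : (0 < v)%N)
  (E : outc u v -> mreg u v m -> mreg u v m -> R[i]) :
  is_povm E ->
  success E <= ((2 * m + 1) ^ 4)%:R * ((2 : R[i]) ^- u + (2 : R[i]) ^- v).
Proof.
move=> hE.
set hN : R[i] := #|{: hfun u v}|%:R.
have hN0 : 0 < hN.
  rewrite /hN ltr0n; apply/card_gt0P.
  by exists [ffun _ => [tuple of nseq v false]].
have eS : success E = hN^-1 * \sum_(r : bits u) \sum_(H : hfun u v)
    bf (E (r, H (pa r), H (pb r))) (psiH_tensor R H) (psiH_tensor R H).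
  by rewrite /success exchange_big.
have eX : (2 : R[i]) ^+ u = (2 ^ u)%:R by rewrite natrX.
have eY : (2 : R[i]) ^+ v = (2 ^ v)%:R by rewrite natrX.
rewrite eX eY eS.
case: (posnP m) => [m0|mpos].
  apply: (@le_trans _ _ (hN^-1 * (#|{: bits v * bits v}|%:R^-1 * hN))).
    by apply: ler_wpM2l; [rewrite invr_ge0 ltW | apply: total0].
  rewrite m0 mulrCA mulVf ?lt0r_neq0 // mulr1 muln0 add0n exp1n mul1r.
  rewrite card_prod natrM card_bits invfM.
  have y0 : 0 <= ((2 ^ v)%:R : R[i])^-1 by rewrite invr_ge0 ler0n.
  have y1 : ((2 ^ v)%:R : R[i])^-1 <= 1.
    by rewrite invf_le1 ?ltr0n ?expn_gt0 // ler1n expn_gt0.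
  apply: (@le_trans _ _ ((2 ^ v)%:R^-1)); first by apply: ler_piMl.
  by rewrite lerDr invr_ge0 ler0n.
apply: le_trans.
  apply: ler_wpM2l; first by rewrite invr_ge0 ltW.
  exact: total.
rewrite /hN card_prod natrM !card_bits expnS natrM.
apply: numeric => //.
- by rewrite ler1n expn_gt0.
- by rewrite ler1n expn_gt0.
- by rewrite lt0r_neq0.
Qed.
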